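(* For each $L\in\{3,4,5,6\}$, the class of I$^2$-GNNs can count $L$-cycles at node level: for all node-graph pairs $(i_1,G_1),(i_2,G_2)$ with $C(L\text{-cycle},i_1,G_1)\ne C(L\text{-cycle},i_2,G_2)$, there exists an I$^2$-GNN whose node representations satisfy $h_{i_1}(G_1)\ne h_{i_2}(G_2)$.
   Context: Graphs are finite, simple, undirected, $G=(V,E)$, possibly carrying node attributes $x_v$ and edge attributes $e_{u,v}$ (a fixed constant when absent). $N(v)$ is the neighbour set of $v$. For $L\ge 3$, an $L$-cycle is a sequence of edges $(v_1,v_2),\dots,(v_L,v_{L+1})$ with $v_1,\dots,v_L$ pairwise distinct and $v_{L+1}=v_1$; two cycles are identified when their edge sets coincide; $C(L\text{-cycle},i,G)$ is the number of inequivalent $L$-cycles containing node $i$. A class $\mathcal F$ of functions on node-graph pairs can count $S$ at node level if for all $(i_1,G_1),(i_2,G_2)$ with $C(S,i_1,G_1)\ne C(S,i_2,G_2)$ there is $f\in\mathcal F$ with $f(i_1,G_1)\ne f(i_2,G_2)$. I$^2$-GNNs. An I$^2$-GNN is specified by an integer $K\ge1$, $T$, arbitrary functions $M_t$ (values in some $\mathbb R^{d_t}$), $U_t$, and arbitrary readouts $R_{\text{edge}},R_{\text{node}}$ on finite multisets. For each root $i\in V$ let $(V_i,E_i)$ be the subgraph of $G$ induced by nodes at shortest-path distance at most $K$ from $i$, and $N_i(k)=\{l\in V_i:(k,l)\in E_i\}$. For each $j\in N(i)$ and $k\in V_i$: $h^{(0)}_{i,j,k}=x_k\oplus\mathbb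 1_{k=i}\oplus\mathbb 1_{k=j}$ ($\oplus$ = concatenation), $h^{(t+1)}_{i,j,k}=U_t\big(h^{(t)}_{i,j,k},\sum_{l\in N_i(k)}M_t(h^{(t)}_{i,j,k},h^{(t)}_{i,j,l},e_{k,l})\big)$; then $h_{i,j}=R_{\text{edge}}(\{\!\{h^{(T)}_{i,j,k}:k\in V_i\}\!\})$ and $h_i=R_{\text{node}}(\{\!\{h_{i,j}:j\in N(i)\}\!\})$. The node-level function computed is $(i,G)\mapsto h_i$; the class of I$^2$-GNNs consists of all such choices. *)

(* Defs.v *)
From HB Require Import structures.
From mathcomp Require Import all_boot all_order all_algebra.
From mathcomp Require Import finmap multiset.
From mathcomp Require Import reals.
Set Implicit Arguments. Unset Strict Implicit. Unset Printing Implicit Defensive.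
Import Order.TTheory GRing.Theory Num.Theory.
Local Open Scope ring_scope.

Record graph (R : realType) (dx de : nat) (V : finType) := Graph {
  adj : rel V;
  adj_sym : symmetric adj;
  adj_irr : irreflexive adj;
  xattr : V -> 'rV[R]_dx;
  eattr : V -> V -> 'rV[R]_de;
  eattr_sym : forall u v, eattr u v = eattr v u }.

Section GraphDefs.
Variables (R : realType) (dx de : nat) (V : finType) (G : graph R dx de V).

Definition nbhd (v : V) : {set V} := [set u | adj G v u].

Fixpoint ball (n : nat) (i : V) : {set V} :=
  match n with
  | 0 => [set i]
  | n'.+1 => ball n' i :|: \bigcup_(u in ball n' i) nbhd u
  end.

(* edge set of the closed walk v_1 -> v_2 -> ... -> v_L -> v_1; edges are
   unordered pairs, represented as 2-element sets *)
Definition cycle_edges (s : seq V) : {set {set V}} :=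
  [set [set x; next s x] | x in s].

Definition is_Lcycle (L : nat) (s : L.-tuple V) : bool :=
  uniq s && cycle (adj G) s.

(* C(L-cycle, i, G): number of L-cycles containing i, cycles being identified
   when their edge sets coincide *)
Definition count_cycles (L : nat) (i : V) : nat :=
  #|[set cycle_edges (tval s) | s in [pred s : L.-tuple V | is_Lcycle s && (i \in tval s)]]|.
End GraphDefs.

(* dimension of the hidden states at layer t: layer 0 is x_k (+) 1 (+) 1 *)
Definition hdim (dx : nat) (dim : nat -> nat) (t : nat) : nat :=
  if t is t'.+1 then dim t' else (dx + 1 + 1)%N.

Record I2GNN (R : realType) (dx de : nat) := MkI2GNN {
  gK : nat;
  gK_pos : (0 < gK)%N;
  gT : nat;
  gdim : nat -> nat;                      (* hidden dim at layer t+1 *)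
  gmdim : nat -> nat;
  gM : forall t, 'rV[R]_(hdim dx gdim t) -> 'rV[R]_(hdim dx gdim t) -> 'rV[R]_de
                 -> 'rV[R]_(gmdim t);
  gU : forall t, 'rV[R]_(hdim dx gdim t) -> 'rV[R]_(gmdim t)
                 -> 'rV[R]_(hdim dx gdim t.+1);
  gpe : nat;
  gpn : nat;
  gRedge : {mset 'rV[R]_(hdim dx gdim gT)}%mset -> 'rV[R]_gpe;
  gRnode : {mset 'rV[R]_gpe}%mset -> 'rV[R]_gpn }.

Section I2GNNDefs.
Variables (R : realType) (dx de : nat) (g : I2GNN R dx de).
Variables (V : finType) (G : graph R dx de V).

Definition Vi (i : V) : {set V} := ball G (gK g) i.
Definition Ni (i k : V) : {set V} := [set l in Vi i | (k \in Vi i) && adj G k l].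

Definition indic (b : bool) : 'rV[R]_1 := \row_(_ < 1) (b%:R).

Fixpoint hstate (i j : V) (t : nat) : V -> 'rV[R]_(hdim dx (gdim g) t) :=
  match t return V -> 'rV[R]_(hdim dx (gdim g) t) with
  | 0 => fun k => row_mx (row_mx (xattr G k) (indic (k == i))) (indic (k == j))
  | t'.+1 => fun k =>
      @gU R dx de g t' (hstate i j t' k)
        (\sum_(l in Ni i k) @gM R dx de g t' (hstate i j t' k) (hstate i j t' l) (eattr G k l))
  end.

Definition hedge (i j : V) : 'rV[R]_(gpe g) :=
  @gRedge R dx de g (seq_mset [seq hstate i j (gT g) k | k <- enum (Vi i)]).

Definition hnode (i : V) : 'rV[R]_(gpn g) :=
  @gRnode R dx de g (seq_mset [seq hedge i j | j <- enum (nbhd G i)]).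
End I2GNNDefs.

(* Main.v *)
Require Import Defs.
From HB Require Import structures.
From mathcomp Require Import all_boot all_order all_algebra.
From mathcomp Require Import finmap multiset.
From mathcomp Require Import reals.
From mathcomp Require Import ring lra.
Set Implicit Arguments. Unset Strict Implicit. Unset Printing Implicit Defensive.
Import Order.TTheory GRing.Theory Num.Theory.
Local Open Scope ring_scope.

Section Comb.
Variables (R : realType) (V : finType) (e : rel V).
Hypotheses (esym : symmetric e) (eirr : irreflexive e).

Definition ind (b : bool) : R := (b : nat)%:R.

Lemma ind_and a b : ind (a && b) = ind a * ind b.
Proof. by case: a; case: b; rewrite /ind /= ?mul0r ?mul1r. Qed.
Lemma ind_neg b : ind (~~ b) = 1 - ind b.
Proof. by case: b; rewrite /ind /= ?subr0 ?subrr. Qed.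
Lemma ind_T : ind true = 1. Proof. by []. Qed.
Lemma ind_F : ind false = 0. Proof. by []. Qed.

Lemma neq_adj x y : e x y -> x != y.
Proof. by apply: contraTneq => ->; rewrite eirr. Qed.

Lemma sum_excl (P : pred V) x :
  \sum_t ind (P t && (t != x)) = \sum_t ind (P t) - ind (P x).
Proof.
rewrite [in RHS](bigD1 x) //= [LHS](bigD1 x) //= eqxx andbF ind_F add0r.
rewrite [X in _ = X - _]addrC addrK; apply: eq_bigr => t /negPf ->.
by rewrite andbT.
Qed.

Lemma sum_exclW (P : pred V) (F : V -> R) x :
  \sum_t ind (P t && (t != x)) * F t = \sum_t ind (P t) * F t - ind (P x) * F x.
Proof.
rewrite [in RHS](bigD1 x) //= [LHS](bigD1 x) //= eqxx andbF ind_F mul0r add0r.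
rewrite [X in _ = X - _]addrC addrK; apply: eq_bigr => t /negPf ->.
by rewrite andbT.
Qed.

Lemma sum_eq1 (F : V -> R) x : \sum_t ind (t == x) * F t = F x.
Proof.
rewrite (bigD1 x) //= eqxx mul1r big1 ?addr0 // => t /negPf ->.
by rewrite mul0r.
Qed.

Lemma sum_eq1' (F : V -> R) x : \sum_t ind (x == t) * F t = F x.
Proof. by rewrite -(sum_eq1 F x); apply: eq_bigr => t _; rewrite eq_sym. Qed.


Ltac splitH := repeat match goal with H : is_true (_ && _) |- _ => case/andP: H => ? ? end.
Ltac atom := first [ done | by rewrite eq_sym | by rewrite esym
  | (apply: neq_adj; by [|rewrite esym])
  | (rewrite eq_sym; apply: neq_adj; by [|rewrite esym]) ].
Ltac bcong := apply/idP/idP => ?; splitH; repeat (apply/andP; split); atom.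

Variable i : V.
Definition Yb j r := \sum_t ind (e r t && e t i && (t != j)).
Definition Xb j q := \sum_p ind (e q p && e p j && (p != i)).
Definition Qb j q := \sum_r ind (e q r && (r != i) && (r != j)).
Definition Wb j q := \sum_r ind (e q r && (r != i) && (r != j)) * Yb j r.
Definition Zb j q := \sum_p ind (e q p && e p j && (p != i)) * Yb j p.
Definition Z5b j q := \sum_p ind (e q p && e p j && (p != i) && e p i).
Definition Tb j p q := \sum_r ind (e q r && (r != i) && (r != j) && e r p).

Lemma N3E : \sum_j \sum_p ind (uniq [:: i;j;p] && cycle e [:: i;j;p]) =
  \sum_j ind (e i j) * \sum_k (ind (e k i) * ind (e k j)).
Proof.
apply: eq_bigr => j _; rewrite mulr_sumr; apply: eq_bigr => p _.
rewrite -!ind_and; congr ind; rewrite /= !inE !negb_or; bcong.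
Qed.

Lemma N4E : \sum_j \sum_p \sum_q ind (uniq [:: i;j;p;q] && cycle e [:: i;j;p;q]) =
  \sum_j ind (e i j) * \sum_k (ind (e k j) * ind (k != i) * Yb j k).
Proof.
apply: eq_bigr => j _; rewrite mulr_sumr; apply: eq_bigr => p _.
rewrite /Yb mulr_sumr mulr_sumr; apply: eq_bigr => q _.
rewrite -!ind_and; congr ind; rewrite /= !inE !negb_or; bcong.
Qed.

Lemma N5E : \sum_j \sum_p \sum_q \sum_r
    ind (uniq [:: i;j;p;q;r] && cycle e [:: i;j;p;q;r]) =
  \sum_j ind (e i j) * \sum_k (ind ((k != i) && (k != j)) *
                               (Xb j k * Yb j k - Z5b j k)).
Proof.
apply: eq_bigr => j _; rewrite exchange_big mulr_sumr; apply: eq_bigr => q _.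
transitivity (\sum_p ind (e i j && ((q != i) && (q != j))) *
   (ind (e q p && e p j && (p != i)) *
    \sum_r ind ((e q r && e r i && (r != j)) && (r != p)))).
  apply: eq_bigr => p _; rewrite !mulr_sumr; apply: eq_bigr => r _.
  rewrite -!ind_and; congr ind; rewrite /= !inE !negb_or; bcong.
rewrite -mulr_sumr ind_and -mulrA; congr (_ * (_ * _)).
under eq_bigr => p _ do rewrite (sum_excl (fun r => e q r && e r i && (r != j))).
rewrite /Xb /Z5b /Yb.
under eq_bigr => p _ do rewrite mulrBr.
rewrite sumrB -mulr_suml; congr (_ - _); apply: eq_bigr => p _.
rewrite -ind_and; congr ind; bcong.
Qed.

Lemma lev_t j p q r :
  \sum_t ind (((e r t && e t i && (t != j)) && (t != q)) && (t != p)) =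
  Yb j r - ind (e r q && e q i && (q != j))
         - ind ((e r p && e p i && (p != j)) && (p != q)).
Proof.
rewrite (sum_excl (fun t => (e r t && e t i && (t != j)) && (t != q))).
by rewrite (sum_excl (fun t => (e r t && e t i && (t != j)))).
Qed.

Lemma lev_r j p q (Hq : (q != i) && (q != j)) (Hp : e q p && e p j && (p != i)) :
  \sum_r ind ((e q r && (r != i) && (r != j)) && (r != p)) *
    (Yb j r - ind (e r q && e q i && (q != j))
            - ind ((e r p && e p i && (p != j)) && (p != q))) =
  Wb j q - Yb j p - ind (e q i) * (Qb j q - 1) - ind (e p i) * Tb j p q.
Proof.
set Cr := fun r => (e q r && (r != i) && (r != j)) && (r != p).
transitivity (\sum_r (ind (Cr r) * Yb j r - ind (e q i) * ind (Cr r)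
                      - ind (e p i) * ind (Cr r && e r p))).
  apply: eq_bigr => r _; case: (boolP (Cr r)) => H; rewrite /Cr in H *; last first.
    by rewrite (negbTE H) /= ind_F !mul0r !mulr0 !subr0.
  rewrite H /= ind_T !mul1r !mulr1.
  have ->: ind (e r q && e q i && (q != j)) = ind (e q i).
    by congr ind; move: H Hq Hp; rewrite /Cr => *; bcong.
  have ->: ind ((e r p && e p i && (p != j)) && (p != q)) = ind (e p i) * ind (e r p).
    by rewrite -ind_and; congr ind; move: H Hq Hp; rewrite /Cr => *; bcong.
  by [].
rewrite !sumrB -!mulr_sumr.
rewrite /Cr (sum_exclW (fun r => e q r && (r != i) && (r != j))).
rewrite (sum_excl (fun r => e q r && (r != i) && (r != j))).
have Hp3 : e q p && (p != i) && (p != j).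
  case/andP: Hp => /andP[H1 H2] H3.
  by rewrite H1 H3 (neq_adj H2).
rewrite Hp3.
rewrite ind_T mul1r /Wb /Qb /Tb; congr (_ - _ * _); apply: eq_bigr => r _; congr ind; bcong.
Qed.

Lemma lev_p j q :
  \sum_p ind (e q p && e p j && (p != i)) *
     (Wb j q - Yb j p - ind (e q i) * (Qb j q - 1) - ind (e p i) * Tb j p q) =
  Xb j q * (Wb j q - ind (e q i) * (Qb j q - 1)) - Zb j q
  - \sum_p ind (e q p && e p j && (p != i)) * ind (e p i) * Tb j p q.
Proof.
transitivity (\sum_p (ind (e q p && e p j && (p != i)) * (Wb j q - ind (e q i) * (Qb j q - 1))
   - ind (e q p && e p j && (p != i)) * Yb j p
   - ind (e q p && e p j && (p != i)) * ind (e p i) * Tb j p q)).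
  by apply: eq_bigr => p _; ring.
by rewrite !sumrB -mulr_suml.
Qed.

Definition Gq j q := ind ((q != i) && (q != j)) *
  (Xb j q * (Wb j q - ind (e q i) * (Qb j q - 1)) - Zb j q).
Definition Hb j := \sum_q ind ((q != i) && (q != j)) *
  \sum_p ind (e q p && e p j && (p != i)) * ind (e p i) * Tb j p q.

Lemma N6E : \sum_j \sum_p \sum_q \sum_r \sum_t
    ind (uniq [:: i;j;p;q;r;t] && cycle e [:: i;j;p;q;r;t]) =
  \sum_j ind (e i j) * (\sum_q Gq j q - Hb j).
Proof.
apply: eq_bigr => j _; rewrite exchange_big.
transitivity (\sum_q ind (e i j) * (ind ((q != i) && (q != j)) *
  \sum_p (ind (e q p && e p j && (p != i)) *
  \sum_r (ind ((e q r && (r != i) && (r != j)) && (r != p)) *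
  \sum_t ind (((e r t && e t i && (t != j)) && (t != q)) && (t != p)))))).
  apply: eq_bigr => q _; rewrite !mulr_sumr; apply: eq_bigr => p _.
  rewrite !mulr_sumr; apply: eq_bigr => r _.
  rewrite !mulr_sumr; apply: eq_bigr => t _.
  rewrite -!ind_and; congr ind; rewrite /= !inE !negb_or; bcong.
rewrite -mulr_sumr; congr (_ * _).
transitivity (\sum_q ind ((q != i) && (q != j)) *
  \sum_p ind (e q p && e p j && (p != i)) *
     (Wb j q - Yb j p - ind (e q i) * (Qb j q - 1) - ind (e p i) * Tb j p q)).
  apply: eq_bigr => q _; case: (boolP ((q != i) && (q != j))) => Hq; last first.
    by rewrite ind_F !mul0r.
  congr (_ * _); apply: eq_bigr => p _.
  case: (boolP (e q p && e p j && (p != i))) => Hp; last first.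
    by rewrite ind_F !mul0r.
  congr (_ * _); rewrite -(lev_r Hq Hp); apply: eq_bigr => r _.
  by rewrite lev_t.
under eq_bigr => q _ do rewrite lev_p mulrBr.
by rewrite sumrB.
Qed.

Definition tau m j := \sum_q \sum_r ind (e m q && e m r && e q r && (q != i) && (r != i)
                                         && (q != j) && (r != j)).
Definition taui m := \sum_q \sum_r ind (e m q && e m r && e q r && (q != i) && (r != i)).

Lemma Hb_swap : \sum_j ind (e i j) * Hb j =
  \sum_m ind (e i m) * \sum_j ind (e j i && e j m) * tau m j.
Proof.
have L1 : \sum_j ind (e i j) * Hb j = \sum_j \sum_p \sum_q \sum_r
   ind (e i j && ((q != i) && (q != j)) && (e q p && e p j && (p != i)) && e p i
        && (e q r && (r != i) && (r != j) && e r p)).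
  apply: eq_bigr => j _; rewrite /Hb mulr_sumr.
  transitivity (\sum_q \sum_p \sum_r
   ind (e i j && ((q != i) && (q != j)) && (e q p && e p j && (p != i)) && e p i
        && (e q r && (r != i) && (r != j) && e r p))); last by rewrite exchange_big.
  apply: eq_bigr => q _; rewrite !mulr_sumr; apply: eq_bigr => p _.
  rewrite /Tb !mulr_sumr; apply: eq_bigr => r _.
  by rewrite -!ind_and; congr ind; bcong.
have L2 : \sum_m ind (e i m) * \sum_j ind (e j i && e j m) * tau m j =
  \sum_m \sum_j \sum_q \sum_r ind (e i m && (e j i && e j m) &&
     (e m q && e m r && e q r && (q != i) && (r != i) && (q != j) && (r != j))).
  apply: eq_bigr => m _; rewrite mulr_sumr; apply: eq_bigr => j _.
  rewrite /tau !mulr_sumr; apply: eq_bigr => q _.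
  rewrite !mulr_sumr; apply: eq_bigr => r _.
  by rewrite -!ind_and; congr ind; bcong.
rewrite L1 L2 exchange_big; apply: eq_bigr => p _; apply: eq_bigr => j _.
apply: eq_bigr => q _; apply: eq_bigr => r _; congr ind; bcong.
Qed.

Lemma tau_eq m j (H : e j i && e j m) : tau m j = taui m - Xb m j - Xb m j.
Proof.
set g := fun q r => e m q && e m r && e q r && (q != i) && (r != i).
transitivity (\sum_q \sum_r ind ((g q r && (q != j)) && (r != j))).
  by apply: eq_bigr => q _; apply: eq_bigr => r _; congr ind; rewrite /g; bcong.
under eq_bigr => q _ do rewrite (sum_excl (fun r => g q r && (q != j))).
rewrite sumrB exchange_big.
under eq_bigr => r _ do rewrite (sum_excl (fun q => g q r)).
rewrite sumrB (sum_excl (fun q => g q j)).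
have -> : g j j = false by rewrite /g eirr /= !andbF.
rewrite ind_F subr0 /taui exchange_big.
have -> : \sum_r ind (g j r) = Xb m j.
  by apply: eq_bigr => r _; congr ind; rewrite /g; move: H => *; bcong.
have -> : \sum_q ind (g q j) = Xb m j.
  by apply: eq_bigr => r _; congr ind; rewrite /g; move: H => *; bcong.
by [].
Qed.

Lemma taui_E m : taui m = \sum_k ind (e k m) * ind (k != i) * Xb m k.
Proof.
apply: eq_bigr => q _; rewrite /Xb mulr_sumr; apply: eq_bigr => r _.
by rewrite -!ind_and; congr ind; bcong.
Qed.

Lemma Hb_total : \sum_j ind (e i j) * Hb j =
  \sum_m ind (e i m) * ((\sum_k ind (e k i) * ind (e k m)) * taui m
                        - 2 * \sum_k ind (e k i) * ind (e k m) * Xb m k).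
Proof.
rewrite Hb_swap; apply: eq_bigr => m _; congr (_ * _).
transitivity (\sum_j (ind (e j i) * ind (e j m) * taui m
   - 2 * (ind (e j i) * ind (e j m) * Xb m j))).
  apply: eq_bigr => j _; case: (boolP (e j i && e j m)) => H.
    rewrite (tau_eq H); move: H => /andP[-> ->]; rewrite ind_T !mul1r; ring.
  by rewrite ind_F mul0r -ind_and (negbTE H) ind_F !mul0r mulr0 subrr.
by rewrite sumrB -mulr_suml -mulr_sumr.
Qed.
End Comb.

Section Cyc.
Variables (R : realType) (dx de : nat) (V : finType) (G : graph R dx de V).
Variables (n : nat) (i : V).
Notation L := n.+3.
Notation e := (adj G).
Local Open Scope nat_scope.

Definition ce (s : L.-tuple V) := cycle_edges (tval s).
Definition T0 := [set s : L.-tuple V | is_Lcycle G s && (nth i s 0 == i)].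

Lemma set2_inj (x y z w : V) : z != w -> [set x; y] = [set z; w] ->
  (x = z /\ y = w) \/ (x = w /\ y = z).
Proof.
move=> nzw E.
have hx : x \in [set z; w] by rewrite -E set21.
have hy : y \in [set z; w] by rewrite -E set22.
have hz : z \in [set x; y] by rewrite E set21.
have hw : w \in [set x; y] by rewrite E set22.
case/set2P: hx => hx; subst x.
  left; split => //; case/set2P: hw => hw; last by [].
  by rewrite hw eqxx in nzw.
right; split => //; case/set2P: hz => hz; last by [].
by rewrite hz eqxx in nzw.
Qed.

Lemma adj_neq x y : e x y -> x != y.
Proof. by apply: contraTneq => ->; rewrite (adj_irr G). Qed.

Lemma mem_ce (s : seq V) x y : cycle e s ->
  [set x; y] \in cycle_edges s -> y = next s x \/ x = next s y.
Proof.
move=> cs /imsetP [z zs E].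
have nz : z != next s z by apply: adj_neq; apply: next_cycle.
case: (set2_inj nz E) => [[-> ->]|[-> ->]]; [by left | by right].
Qed.

Lemma next_nth' (s : seq V) k : uniq s -> k.+1 < size s ->
  next s (nth i s k) = nth i s k.+1.
Proof.
move=> us ks; rewrite next_nth mem_nth ?(ltnW ks) //.
case: s us ks => [//|y p] us ks.
rewrite index_uniq ?(ltnW ks) //=.
by apply: set_nth_default.
Qed.

Lemma T0P s : s \in T0 -> [/\ uniq s, cycle e s & nth i s 0 = i].
Proof. by rewrite inE /is_Lcycle => /andP[/andP[-> ->] /eqP ->]. Qed.

Lemma same_next (s s' : L.-tuple V) : s \in T0 -> s' \in T0 -> ce s' = ce s ->
  next s' i = next s i -> s' = s.
Proof.
move=> /T0P[us cs hs] /T0P[us' cs' hs'] E N.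
have sz : size s = L by rewrite size_tuple.
have sz' : size s' = L by rewrite size_tuple.
have key : forall k, k.+1 < L -> nth i s' k = nth i s k /\ nth i s' k.+1 = nth i s k.+1.
  elim=> [_|k IH hk].
    split; first by rewrite hs hs'.
    by rewrite -next_nth' ?sz' // -next_nth' ?sz // hs hs'.
  have [IH1 IH2] := IH (ltnW hk); split => //.
  have xs' : nth i s' k.+1 \in (tval s') by rewrite mem_nth // sz' ltnW.
  have ed : [set nth i s' k.+1; nth i s' k.+2] \in ce s.
    by rewrite -E; apply/imsetP; exists (nth i s' k.+1) => //; rewrite next_nth' ?sz'.
  rewrite IH2 in ed; case: (mem_ce cs ed) => [->|H]; first by rewrite next_nth' ?sz.
  exfalso.
  have : nth i s' k.+2 = nth i s k.
    rewrite -next_nth' ?sz ?(ltnW hk) // in H.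
    by rewrite -(prev_next us (nth i s' k.+2)) -H prev_next.
  rewrite -IH1 => /eqP; rewrite nth_uniq ?sz' //; last by do 2 apply: ltnW.
  by rewrite -[k.+2]addn2 -{2}[k]addn0 eqn_add2l.
apply: val_inj; apply: (eq_from_nth (x0 := i)); first by rewrite sz sz'.
rewrite sz' => k hk; case: k hk => [|k] hk; first by rewrite hs hs'.
by case: (key k hk).
Qed.

Definition sig (s : L.-tuple V) : L.-tuple V := rotr_tuple 1 (rev_tuple s).

Lemma sigE (s : L.-tuple V) : s \in T0 -> exists w, tval s = i :: w /\ tval (sig s) = i :: rev w.
Proof.
move=> /T0P[_ _ hs]; case: s hs => [[|x w] /= szs] // hs; subst x.
exists w; split => //; rewrite /sig /= rev_cons rotr1_rcons //.
Qed.

Lemma sig_T0 s : s \in T0 -> sig s \in T0.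
Proof.
move=> s0; have [us cs hs] := T0P s0; have [w [E1 E2]] := sigE s0.
rewrite inE /is_Lcycle; apply/andP; split; last by rewrite E2.
rewrite /sig /= rotr_uniq rev_uniq us /= rotr_cycle rev_cycle.
by rewrite (@eq_cycle _ _ e) // => a b /=; rewrite (adj_sym G).
Qed.

Lemma ce_sig s : s \in T0 -> ce (sig s) = ce s.
Proof.
move=> /T0P[us cs hs]; rewrite /ce /cycle_edges /sig /=.
apply/setP => E; apply/imsetP/imsetP => [[x xs ->]|[z zs ->]].
  rewrite mem_rotr mem_rev in xs.
  exists (prev s x); first by rewrite mem_prev.
  have Hn : next (rev s) x = prev s x := next_rev us x.
  by rewrite next_rotr ?rev_uniq // Hn next_prev // setUC.
exists (next s z); first by rewrite mem_rotr mem_rev mem_next.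
have Hn : next (rev s) (next s z) = prev s (next s z) := next_rev us _.
by rewrite next_rotr ?rev_uniq // Hn prev_next // setUC.
Qed.

Lemma next_sig s : s \in T0 -> next (sig s) i = prev s i.
Proof.
move=> /T0P[us _ _]; have Hn : next (rev s) i = prev s i := next_rev us i.
by rewrite /sig /= next_rotr ?rev_uniq // Hn.
Qed.

Lemma sig_neq s : s \in T0 -> sig s != s.
Proof.
move=> s0; have [us cs hs] := T0P s0; apply/eqP => E.
have N : next s i = prev s i by rewrite -next_sig // E.
have sz : size s = L by rewrite size_tuple.
have h1 : next s i = nth i s 1 by rewrite -{1}hs next_nth' ?sz.
have : next s (nth i s 1) = i by rewrite -h1 N next_prev.
rewrite next_nth' ?sz // -{2}hs => /eqP; rewrite nth_uniq ?sz //.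
Qed.

Lemma fiber s s' : s \in T0 -> s' \in T0 -> ce s' = ce s -> s' = s \/ s' = sig s.
Proof.
move=> s0 s0' E; have [us cs hs] := T0P s0; have [us' cs' hs'] := T0P s0'.
have is' : i \in (tval s') by rewrite -{1}hs' mem_nth // size_tuple.
have ed : [set i; next s' i] \in ce s.
  by rewrite -E; apply/imsetP; exists i.
case: (mem_ce cs ed) => H; first by left; apply: same_next.
right; apply: same_next => //; first exact: sig_T0.
  by rewrite ce_sig.
by rewrite next_sig // {2}H prev_next.
Qed.

Lemma card_T0 : (count_cycles G L i * 2)%N = #|T0|.
Proof.
have img : [set cycle_edges (tval s) | s in [pred s : L.-tuple V | is_Lcycle G s && (i \in tval s)]]
           = ce @: T0.
  apply/setP => E; apply/imsetP/imsetP => [[s /andP[cyc is_] ->]|[s s0 ->]].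
    have rs : nth i (rot (index i s) s) 0 = i by rewrite rot_index.
    exists (rot_tuple (index i s) s).
      move: cyc; rewrite inE /is_Lcycle /= rot_uniq rot_cycle rs eqxx andbT.
      by [].
    rewrite /ce /cycle_edges /=; apply/setP => E'.
    move: cyc => /andP[us _].
    apply/imsetP/imsetP => [[x xs ->]|[x xs ->]]; exists x;
      rewrite ?mem_rot ?next_rot // in xs *.
  have [us cs hs] := T0P s0.
  exists s => //; rewrite inE /= /is_Lcycle us cs /= -{1}hs mem_nth ?size_tuple //.
rewrite /count_cycles img -sum_nat_const -[#|T0|]sum1_card (partition_big_imset ce) /=.
apply: eq_bigr => E /imsetP [s0 s00 ->].
rewrite (_ : \sum_(s in T0 | ce s == ce s0) 1 = #|[set s0; sig s0]|)%N.
  by rewrite cards2 eq_sym (sig_neq s00).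
rewrite -sum1_card; apply: eq_bigl => s; rewrite !inE.
apply/idP/idP => [/andP[s1 /eqP E1]|].
  have s1' : s \in T0 by rewrite inE.
  by case: (fiber s00 s1' E1) => ->; rewrite eqxx ?orbT.
case/orP => /eqP ->; first by have := s00; rewrite inE => ->; rewrite eqxx.
by have := sig_T0 s00; rewrite inE => ->; rewrite ce_sig // eqxx.
Qed.
End Cyc.

Section TupleSum.
Variables (R : realType) (T : finType).

Lemma tuple_sum n (F : n.+1.-tuple T -> R) :
  \sum_t F t = \sum_x \sum_(w : n.-tuple T) F [tuple of x :: w].
Proof.
rewrite pair_big /=.
rewrite (reindex (fun p : T * n.-tuple T => [tuple of p.1 :: p.2])) //.
exists (fun t : n.+1.-tuple T => (thead t, [tuple of behead t])).
  by move=> [x w] _ /=; congr pair; apply: val_inj.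
by move=> t _; rewrite [in RHS](tuple_eta t).
Qed.

Lemma tuple_sum0 (F : 0.-tuple T -> R) : \sum_t F t = F [tuple].
Proof. by rewrite (big_pred1 [tuple]) // => t /=; apply/esym/eqP; apply: tuple0. Qed.
End TupleSum.

Section CardSum.
Variables (R : realType) (dx de : nat) (V : finType) (G : graph R dx de V) (i : V).
Notation e := (adj G).

Lemma card_T0_sum n :
  (#|T0 G n i|)%:R = \sum_(w : n.+2.-tuple V)
      ind R (uniq (i :: tval w) && cycle e (i :: tval w)).
Proof.
rewrite -sum1_card big_mkcond natr_sum tuple_sum (bigD1 i) //= [X in _ + X]big1 ?addr0.
  apply: eq_bigr => w _; rewrite inE /is_Lcycle /= eqxx andbT.
  by case: (_ && _).
move=> x xi; apply: big1 => w _; rewrite inE /= (negbTE xi) andbF.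
by [].
Qed.

Lemma card3 : (#|T0 G 0 i|)%:R =
  \sum_j \sum_p ind R (uniq [:: i;j;p] && cycle e [:: i;j;p]).
Proof.
rewrite card_T0_sum tuple_sum; apply: eq_bigr => j _.
rewrite tuple_sum; apply: eq_bigr => p _.
by rewrite tuple_sum0.
Qed.

Lemma card4 : (#|T0 G 1 i|)%:R =
  \sum_j \sum_p \sum_q ind R (uniq [:: i;j;p;q] && cycle e [:: i;j;p;q]).
Proof.
rewrite card_T0_sum tuple_sum; apply: eq_bigr => j _.
rewrite tuple_sum; apply: eq_bigr => p _.
rewrite tuple_sum; apply: eq_bigr => q _.
by rewrite tuple_sum0.
Qed.

Lemma card5 : (#|T0 G 2 i|)%:R =
  \sum_j \sum_p \sum_q \sum_r ind R (uniq [:: i;j;p;q;r] && cycle e [:: i;j;p;q;r]).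
Proof.
rewrite card_T0_sum tuple_sum; apply: eq_bigr => j _.
rewrite tuple_sum; apply: eq_bigr => p _.
rewrite tuple_sum; apply: eq_bigr => q _.
rewrite tuple_sum; apply: eq_bigr => r _.
by rewrite tuple_sum0.
Qed.

Lemma card6 : (#|T0 G 3 i|)%:R =
  \sum_j \sum_p \sum_q \sum_r \sum_t
     ind R (uniq [:: i;j;p;q;r;t] && cycle e [:: i;j;p;q;r;t]).
Proof.
rewrite card_T0_sum tuple_sum; apply: eq_bigr => j _.
rewrite tuple_sum; apply: eq_bigr => p _.
rewrite tuple_sum; apply: eq_bigr => q _.
rewrite tuple_sum; apply: eq_bigr => r _.
rewrite tuple_sum; apply: eq_bigr => t _.
by rewrite tuple_sum0.
Qed.
End CardSum.
Section Ball.
Variables (R : realType) (dx de : nat) (V : finType) (G : graph R dx de V) (i : V).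
Local Open Scope nat_scope.

Lemma ball_i n : i \in ball G n i.
Proof. by elim: n => [|n IH] /=; rewrite ?set11 // inE IH. Qed.

Lemma ball_P n : n.+1 <= #|ball G n i| \/ ball G n.+1 i = ball G n i.
Proof.
elim: n => [|n IH]; first by left; rewrite /= cards1.
have [E|NE] := eqVneq (ball G n.+1 i) (ball G n i).
  right; transitivity (ball G n.+1 i :|: \bigcup_(u in ball G n.+1 i) nbhd G u) => //.
  by rewrite E; exact: E.
case: IH => [IH|]; last by move=> E; rewrite E eqxx in NE.
left; apply: leq_trans (proper_card _); first exact: IH.
rewrite properEneq; apply/andP; split; first by rewrite eq_sym.
by rewrite [ball G n.+1 i]/= subsetUl.
Qed.

Lemma ball_stable n : #|V| <= n -> ball G n.+1 i = ball G n i.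
Proof.
move=> hn; case: (ball_P n) => // H; exfalso.
have := max_card (mem (ball G n i)); rewrite leqNgt => /negP; apply.
by apply: leq_trans H.
Qed.

Lemma ball_closed n k l : #|V| <= n -> k \in ball G n i -> adj G k l -> l \in ball G n i.
Proof.
move=> hn kb kl; rewrite -ball_stable // /= inE; apply/orP; right.
by apply/bigcupP; exists k => //; rewrite inE.
Qed.
End Ball.

Section GNN.
Variables (R : realType) (dx de : nat).

Definition D := 10%N.
Definition mk (l : seq R) : 'rV[R]_D := \row_(k < D) nth 0 l k.
Definition gt (h : 'rV[R]_D) (k : nat) : R := h 0 (inord k).
Arguments mk : simpl never.
Arguments gt : simpl never.

Lemma gt_mk l k : (k < D)%N -> gt (mk l) k = nth 0 l k.
Proof. by move=> hk; rewrite /gt /mk mxE inordK. Qed.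

Definition gdimf := fun _ : nat => D.

Definition a0 (h : 'rV[R]_(dx + 1 + 1)) : R := (rsubmx (lsubmx h)) 0 0.
Definition b0 (h : 'rV[R]_(dx + 1 + 1)) : R := (rsubmx h) 0 0.
Arguments a0 : simpl never.
Arguments b0 : simpl never.

Definition msg1 (h : 'rV[R]_D) : 'rV[R]_D :=
  let a := gt h 0 in let b := gt h 1 in let A := gt h 2 in let B := gt h 3 in
  mk [:: B * (1 - a); A * (1 - b); (1 - a) * (1 - b); B * (1 - a) * A].
Definition msg2 (h : 'rV[R]_D) : 'rV[R]_D :=
  let a := gt h 0 in let b := gt h 1 in let B := gt h 3 in let Y := gt h 5 in
  mk [:: (1 - a) * (1 - b) * Y; B * (1 - a) * Y].
Definition upd1 (h m : 'rV[R]_D) : 'rV[R]_D :=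
  mk [:: gt h 0; gt h 1; gt h 2; gt h 3; gt m 0; gt m 1; gt m 2; gt m 3].
Definition upd2 (h m : 'rV[R]_D) : 'rV[R]_D :=
  mk [:: gt h 0; gt h 1; gt h 2; gt h 3; gt h 4; gt h 5; gt h 6; gt h 7; gt m 0; gt m 1].

Definition Mf (t : nat) : 'rV[R]_(hdim dx gdimf t) -> 'rV[R]_(hdim dx gdimf t) ->
    'rV[R]_de -> 'rV[R]_(gdimf t) :=
  match t as t0 return 'rV[R]_(hdim dx gdimf t0) -> 'rV[R]_(hdim dx gdimf t0) ->
    'rV[R]_de -> 'rV[R]_(gdimf t0) with
  | 0 => fun _ hl _ => mk [:: a0 hl; b0 hl]
  | 1 => fun _ hl _ => msg1 hl
  | _ => fun _ hl _ => msg2 hl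
  end.

Definition Uf (t : nat) : 'rV[R]_(hdim dx gdimf t) -> 'rV[R]_(gdimf t) ->
    'rV[R]_(hdim dx gdimf t.+1) :=
  match t as t0 return 'rV[R]_(hdim dx gdimf t0) -> 'rV[R]_(gdimf t0) ->
    'rV[R]_(hdim dx gdimf t0.+1) with
  | 0 => fun h m => mk [:: a0 h; b0 h; gt m 0; gt m 1]
  | 1 => fun h m => upd1 h m
  | _ => fun h m => upd2 h m
  end.

Definition alpha (L : nat) (h : 'rV[R]_D) : R :=
  let a := gt h 0 in let b := gt h 1 in let A := gt h 2 in let B := gt h 3 in
  let X := gt h 4 in let Y := gt h 5 in let Q := gt h 6 in let Z5 := gt h 7 in
  let W := gt h 8 in let Z := gt h 9 in
  match L with
  | 3 => A * B
  | 4 => B * (1 - a) * Y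
  | 5 => (1 - a) * (1 - b) * (X * Y - Z5)
  | _ => (1 - a) * (1 - b) * (X * (W - A * (Q - 1)) - Z)
  end.
Definition beta (h : 'rV[R]_D) : R := gt h 2 * gt h 3.
Definition gamma (h : 'rV[R]_D) : R := gt h 3 * (1 - gt h 0) * gt h 4.
Definition delta (h : 'rV[R]_D) : R := gt h 2 * gt h 3 * gt h 4.
Definition c6 (L : nat) : R := if L == 6%N then 1 else 0.

Definition Redge (L : nat) (ms : {mset 'rV[R]_(hdim dx gdimf 3)}%mset) : 'rV[R]_1 :=
  \row_(_ < 1) (\sum_(h <- ms) alpha L h
     - c6 L * ((\sum_(h <- ms) beta h) * (\sum_(h <- ms) gamma h)
               - 2 * \sum_(h <- ms) delta h)).
Definition Rnode (ms : {mset 'rV[R]_1}%mset) : 'rV[R]_1 :=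
  \row_(_ < 1) \sum_(h <- ms) h 0 0.

Definition gnn (L K : nat) (HK : (0 < K)%N) : I2GNN R dx de :=
  @MkI2GNN R dx de K HK 3 gdimf gdimf Mf Uf 1 1 (Redge L) Rnode.
End GNN.

Section Bridge.
Variables (R : realType) (dx de : nat) (V : finType) (G : graph R dx de V).
Variables (L K : nat) (HK : (0 < K)%N) (i j : V).
Hypothesis hK : (#|V| <= K)%N.
Notation g := (@gnn R dx de L K HK).
Notation C := (ball G K i).
Notation e := (adj G).
Notation ind := (ind R).

Lemma Ni_E k : k \in C -> Ni g G i k = nbhd G k.
Proof.
move=> hk; apply/setP => l; rewrite /Ni /Vi /= !inE hk /=.
by case E: (adj G k l); rewrite ?andbT ?andbF // (ball_closed hK hk E).
Qed.

Lemma sum_Ni k (hk : k \in C) (F : V -> R) :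
  \sum_(l in Ni g G i k) F l = \sum_l ind (e k l) * F l.
Proof.
rewrite big_mkcond Ni_E //; apply: eq_bigr => l _; rewrite inE.
by case: (e k l); rewrite /ind /= ?mul1r ?mul0r.
Qed.

Lemma gt_sum (S : {set V}) (F : V -> 'rV[R]_D) c :
  gt (\sum_(l in S) F l) c = \sum_(l in S) gt (F l) c.
Proof. by rewrite /gt summxE. Qed.

Definition fa k := ind (k == i).
Definition fb k := ind (k == j).
Definition fA k := \sum_l ind (e k l) * fa l.
Definition fB k := \sum_l ind (e k l) * fb l.
Definition fX k := \sum_l ind (e k l) * (fB l * (1 - fa l)).
Definition fY k := \sum_l ind (e k l) * (fA l * (1 - fb l)).
Definition fQ k := \sum_l ind (e k l) * ((1 - fa l) * (1 - fb l)).
Definition fZ5 k := \sum_l ind (e k l) * (fB l * (1 - fa l) * fA l).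
Definition fW k := \sum_l ind (e k l) * ((1 - fa l) * (1 - fb l) * fY l).
Definition fZ k := \sum_l ind (e k l) * (fB l * (1 - fa l) * fY l).

Lemma hs0a k : a0 (hstate g G i j 0 k) = fa k.
Proof. by rewrite /a0 /= row_mxKl row_mxKr mxE. Qed.
Lemma hs0b k : b0 (hstate g G i j 0 k) = fb k.
Proof. by rewrite /b0 /= row_mxKr mxE. Qed.

Lemma hs1 k : k \in C -> hstate g G i j 1 k = mk [:: fa k; fb k; fA k; fB k].
Proof.
move=> hk.
have -> : hstate g G i j 1 k = mk [:: a0 (hstate g G i j 0 k); b0 (hstate g G i j 0 k);
   gt (\sum_(l in Ni g G i k) mk [:: a0 (hstate g G i j 0 l); b0 (hstate g G i j 0 l)]) 0;
   gt (\sum_(l in Ni g G i k) mk [:: a0 (hstate g G i j 0 l); b0 (hstate g G i j 0 l)]) 1]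
  by [].
rewrite !gt_sum !sum_Ni // hs0a hs0b /fA /fB.
by congr (mk [:: _; _; _; _]); apply: eq_bigr => l _; rewrite gt_mk // ?hs0a ?hs0b.
Qed.

Lemma sum_C k (hk : k \in C) (F F' : V -> R) :
  (forall l, l \in C -> F l = F' l) ->
  \sum_l ind (e k l) * F l = \sum_l ind (e k l) * F' l.
Proof.
move=> H; apply: eq_bigr => l _; case E: (e k l); last by rewrite /ind /= !mul0r.
by rewrite H // (ball_closed hK hk E).
Qed.

Lemma hs2 k : k \in C -> hstate g G i j 2 k =
  mk [:: fa k; fb k; fA k; fB k; fX k; fY k; fQ k; fZ5 k].
Proof.
move=> hk.
have -> : hstate g G i j 2 k = upd1 (hstate g G i j 1 k)
   (\sum_(l in Ni g G i k) msg1 (hstate g G i j 1 l)) by [].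
rewrite hs1 // /upd1 !gt_sum !sum_Ni // !gt_mk //.
congr (mk [:: _; _; _; _; _; _; _; _]); (apply: sum_C => // l hl; rewrite hs1 //);
  by rewrite /msg1 /= !gt_mk.
Qed.

Lemma hs3 k : k \in C -> hstate g G i j 3 k =
  mk [:: fa k; fb k; fA k; fB k; fX k; fY k; fQ k; fZ5 k; fW k; fZ k].
Proof.
move=> hk.
have -> : hstate g G i j 3 k = upd2 (hstate g G i j 2 k)
   (\sum_(l in Ni g G i k) msg2 (hstate g G i j 2 l)) by [].
rewrite hs2 // /upd2 !gt_sum !sum_Ni // !gt_mk //.
congr (mk [:: _; _; _; _; _; _; _; _; _; _]); (apply: sum_C => // l hl; rewrite hs2 //);
  by rewrite /msg2 /= !gt_mk.
Qed.

Definition st3 k := mk [:: fa k; fb k; fA k; fB k; fX k; fY k; fQ k; fZ5 k; fW k; fZ k].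

Lemma fA_E k : fA k = ind (e k i).
Proof.
rewrite /fA -(sum_eq1 (fun l => ind (e k l)) i).
by apply: eq_bigr => l _; rewrite mulrC.
Qed.
Lemma fB_E k : fB k = ind (e k j).
Proof.
rewrite /fB -(sum_eq1 (fun l => ind (e k l)) j).
by apply: eq_bigr => l _; rewrite mulrC.
Qed.
Lemma fa_E k : 1 - fa k = ind (k != i). Proof. by rewrite ind_neg. Qed.
Lemma fb_E k : 1 - fb k = ind (k != j). Proof. by rewrite ind_neg. Qed.

Lemma fX_E k : fX k = Xb R e i j k.
Proof. by apply: eq_bigr => l _; rewrite fB_E fa_E -!ind_and andbA. Qed.
Lemma fY_E k : fY k = Yb R e i j k.
Proof. by apply: eq_bigr => l _; rewrite fA_E fb_E -!ind_and andbA. Qed.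
Lemma fQ_E k : fQ k = Qb R e i j k.
Proof. by apply: eq_bigr => l _; rewrite fa_E fb_E -!ind_and andbA. Qed.
Lemma fZ5_E k : fZ5 k = Z5b R e i j k.
Proof. by apply: eq_bigr => l _; rewrite fA_E fB_E fa_E -!ind_and !andbA. Qed.
Lemma fW_E k : fW k = Wb R e i j k.
Proof. by apply: eq_bigr => l _; rewrite fY_E fa_E fb_E mulrA -!ind_and !andbA. Qed.
Lemma fZ_E k : fZ k = Zb R e i j k.
Proof. by apply: eq_bigr => l _; rewrite fY_E fB_E fa_E mulrA -!ind_and !andbA. Qed.

Hypothesis hj : e i j.

Lemma out_adj k l : k \notin C -> e k l -> l \notin C.
Proof.
move=> hk kl; apply/negP => hl; move/negP: hk; apply.
by apply: (ball_closed hK hl); rewrite (adj_sym G).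
Qed.

Lemma van_sum k (F : V -> R) : k \notin C -> (forall l, l \notin C -> F l = 0) ->
  \sum_l ind (e k l) * F l = 0.
Proof.
move=> hk HF; apply: big1 => l _; case E: (e k l); last by rewrite /ind /= mul0r.
by rewrite HF ?mulr0 // (out_adj hk E).
Qed.

Lemma iC : i \in C. Proof. exact: ball_i. Qed.
Lemma jC : j \in C. Proof. exact: (ball_closed hK iC hj). Qed.

Lemma van_a k : k \notin C -> fa k = 0.
Proof. by move=> hk; rewrite /fa; case: eqP => // E; rewrite E iC in hk. Qed.
Lemma van_b k : k \notin C -> fb k = 0.
Proof. by move=> hk; rewrite /fb; case: eqP => // E; rewrite E jC in hk. Qed.
Lemma van_A k : k \notin C -> fA k = 0.
Proof. by move=> hk; apply: van_sum => // l hl; rewrite van_a. Qed.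
Lemma van_B k : k \notin C -> fB k = 0.
Proof. by move=> hk; apply: van_sum => // l hl; rewrite van_b. Qed.
Lemma van_X k : k \notin C -> fX k = 0.
Proof. by move=> hk; apply: van_sum => // l hl; rewrite van_B ?mul0r. Qed.
Lemma van_Y k : k \notin C -> fY k = 0.
Proof. by move=> hk; apply: van_sum => // l hl; rewrite van_A ?mul0r. Qed.
Lemma van_Z5 k : k \notin C -> fZ5 k = 0.
Proof. by move=> hk; apply: van_sum => // l hl; rewrite van_B ?mul0r. Qed.
Lemma van_Z k : k \notin C -> fZ k = 0.
Proof. by move=> hk; apply: van_sum => // l hl; rewrite van_B ?mul0r. Qed.

Lemma hedge_sum (f : 'rV[R]_D -> R) : (forall k, k \notin C -> f (st3 k) = 0) ->
  \sum_(h <- seq_mset [seq hstate g G i j 3 k | k <- enum (Vi g G i)]) f h =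
  \sum_k f (st3 k).
Proof.
move=> Hf; rewrite (perm_big _ (perm_eq_seq_mset _)) big_map big_enum.
rewrite big_mkcond; apply: eq_bigr => k _.
case: ifP => hk; first by rewrite (hs3 hk).
by rewrite Hf // hk.
Qed.
End Bridge.

Section Final.
Variables (R : realType) (dx de : nat) (V : finType) (G : graph R dx de V).
Variables (L K : nat) (HK : (0 < K)%N) (i : V).
Hypothesis hK : (#|V| <= K)%N.
Notation e := (adj G).
Notation g := (@gnn R dx de L K HK).
Notation ind := (ind R).

Definition hval j := \sum_k alpha L (st3 G i j k)
  - c6 R L * ((\sum_k beta (st3 G i j k)) * (\sum_k gamma (st3 G i j k))
              - 2 * \sum_k delta (st3 G i j k)).

Lemma hedge_val j (hj : e i j) : (hedge g G i j) 0 0 = hval j.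
Proof.
have -> : hedge g G i j = Redge L (seq_mset [seq hstate g G i j 3 k | k <- enum (Vi g G i)]) by [].
rewrite /Redge mxE /hval !(hedge_sum L HK hK).
- by [].
- move=> k hk; rewrite /delta /st3 !gt_mk //= (van_A hK hk) (van_B hK hj hk); ring.
- move=> k hk; rewrite /gamma /st3 !gt_mk //= (van_B hK hj hk); ring.
- move=> k hk; rewrite /beta /st3 !gt_mk //= (van_A hK hk); ring.
move=> k hk; rewrite /alpha /st3 !gt_mk //= (van_a hk) (van_b hK hj hk) (van_A hK hk)
  (van_B hK hj hk) (van_X hK hj hk) (van_Y j hK hk) (van_Z5 hK hj hk) (van_Z hK hj hk).
by case: L => [|[|[|[|[|[|L']]]]]] /=; ring.
Qed.

Lemma hnode_val : (hnode g G i) 0 0 = \sum_j ind (e i j) * hval j.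
Proof.
have -> : hnode g G i = Rnode (seq_mset [seq hedge g G i j | j <- enum (nbhd G i)]) by [].
rewrite /Rnode mxE (perm_big _ (perm_eq_seq_mset _)) big_map big_enum /= big_mkcond.
apply: eq_bigr => j _; rewrite inE; case E: (e i j); last by rewrite /ind /= mul0r.
by rewrite hedge_val // /ind /= mul1r.
Qed.
End Final.

Section Vals.
Variables (R : realType) (dx de : nat) (V : finType) (G : graph R dx de V).
Variables (K : nat) (HK : (0 < K)%N) (i : V).
Hypothesis hK : (#|V| <= K)%N.
Notation e := (adj G).
Notation ind := (ind R).
Let esym := adj_sym G.
Let eirr := adj_irr G.

Lemma val3 : (hnode (@gnn R dx de 3 K HK) G i) 0 0 = (#|T0 G 0 i|)%:R.
Proof.
rewrite hnode_val // card3 (N3E R esym eirr); apply: eq_bigr => j _; congr (_ * _).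
rewrite /hval /c6 /= mul0r subr0; apply: eq_bigr => k _.
by rewrite /alpha /st3 !gt_mk //= fA_E fB_E.
Qed.

Lemma val4 : (hnode (@gnn R dx de 4 K HK) G i) 0 0 = (#|T0 G 1 i|)%:R.
Proof.
rewrite hnode_val // card4 (N4E R esym eirr); apply: eq_bigr => j _; congr (_ * _).
rewrite /hval /c6 /= mul0r subr0; apply: eq_bigr => k _.
by rewrite /alpha /st3 !gt_mk //= fa_E fB_E fY_E.
Qed.

Lemma val5 : (hnode (@gnn R dx de 5 K HK) G i) 0 0 = (#|T0 G 2 i|)%:R.
Proof.
rewrite hnode_val // card5 (N5E R esym eirr); apply: eq_bigr => j _; congr (_ * _).
rewrite /hval /c6 /= mul0r subr0; apply: eq_bigr => k _.
by rewrite /alpha /st3 !gt_mk //= fa_E fb_E fX_E fY_E fZ5_E ind_and.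
Qed.

Lemma val6 : (hnode (@gnn R dx de 6 K HK) G i) 0 0 = (#|T0 G 3 i|)%:R.
Proof.
rewrite hnode_val // card6 (N6E R esym eirr).
rewrite /hval; under eq_bigr do rewrite mulrBr.
rewrite sumrB; symmetry; under eq_bigr do rewrite mulrBr.
rewrite sumrB (Hb_total R esym eirr); congr (_ - _).
  apply: eq_bigr => j _; congr (_ * _); apply: eq_bigr => k _.
  by rewrite /alpha /st3 !gt_mk //= fa_E fb_E fX_E fW_E fA_E fQ_E fZ_E /Gq ind_and.
apply: eq_bigr => j _; congr (_ * _); rewrite /c6 /= mul1r taui_E.
congr (_ * _ - 2 * _).
- by apply: eq_bigr => k _; rewrite /beta /st3 !gt_mk //= fA_E fB_E.
- by apply: eq_bigr => k _; rewrite /gamma /st3 !gt_mk //= fa_E fB_E fX_E.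
- by apply: eq_bigr => k _; rewrite /delta /st3 !gt_mk //= fA_E fB_E fX_E.
exact: esym.
Qed.
End Vals.

Lemma eq_count (R : realType) (dx de : nat) (V1 V2 : finType)
  (G1 : graph R dx de V1) (G2 : graph R dx de V2) (i1 : V1) (i2 : V2) (n : nat) :
  (#|T0 G1 n i1|)%:R = (#|T0 G2 n i2|)%:R :> R ->
  count_cycles G1 n.+3 i1 = count_cycles G2 n.+3 i2.
Proof.
move/eqP; rewrite eqr_nat -(card_T0 G1) -(card_T0 G2) => /eqP H.
by apply/eqP; rewrite -(eqn_pmul2r (_ : (0 < 2)%N)) // H.
Qed.

Theorem theorem3 (R : realType) (dx de : nat) (L : nat)
  (HL : L \in [:: 3; 4; 5; 6]%N)
  (V1 V2 : finType) (G1 : graph R dx de V1) (G2 : graph R dx de V2)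
  (i1 : V1) (i2 : V2) :
  count_cycles G1 L i1 <> count_cycles G2 L i2 ->
  exists g : I2GNN R dx de, hnode g G1 i1 <> hnode g G2 i2.
Proof.
move=> Hne.
have HK : (0 < (maxn #|V1| #|V2|).+1)%N by [].
have hK1 : (#|V1| <= (maxn #|V1| #|V2|).+1)%N by apply: leqW; apply: leq_maxl.
have hK2 : (#|V2| <= (maxn #|V1| #|V2|).+1)%N by apply: leqW; apply: leq_maxr.
move: HL; rewrite !inE => /orP[/eqP EL|/orP[/eqP EL|/orP[/eqP EL|/eqP EL]]]; subst L.
- exists (@gnn R dx de 3 _ HK) => E; apply: Hne; apply: (eq_count (n := 0)).
  by rewrite -(val3 G1 HK i1 hK1) -(val3 G2 HK i2 hK2) E.
- exists (@gnn R dx de 4 _ HK) => E; apply: Hne; apply: (eq_count (n := 1)).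
  by rewrite -(val4 G1 HK i1 hK1) -(val4 G2 HK i2 hK2) E.
- exists (@gnn R dx de 5 _ HK) => E; apply: Hne; apply: (eq_count (n := 2)).
  by rewrite -(val5 G1 HK i1 hK1) -(val5 G2 HK i2 hK2) E.
- exists (@gnn R dx de 6 _ HK) => E; apply: Hne; apply: (eq_count (n := 3)).
  by rewrite -(val6 G1 HK i1 hK1) -(val6 G2 HK i2 hK2) E.
Qed.
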